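(* Let $A$ be a predicate and $(\rho_i)_i$ a family of mixed memories with $\rho_i\models A$ for all $i$ such that $\sum_i\rho_i$ exists. Then $\sum_i\rho_i\models A$.
   Context: Variables are program variables, entangled ghosts or unentangled ghosts. $\ell^2[V]$ is the Hilbert space with orthonormal basis indexed by assignments on $V$; mixed memories over $V$ are positive trace-class operators on $\ell^2[V]$; $\mathrm{tr}_W$ is partial trace; $\mathrm{supp}\,\rho$ is the closure of the range of $\rho$. A mixed memory over $V\cup W$ is $(V,W)$-separable if it is a convergent sum $\sum_i\rho_i\otimes\rho_i'$ of mixed memories over $V$ and $W$. A predicate over $V$ is a closed subspace of $\ell^2[V]$. For program variables $X$, entangled ghosts $E$, unentangled ghosts $U$ and a predicate $A$ over $X\cup E\cup U$, a mixed memory $\rho$ over $X$ satisfies $A$ ($\rho\models A$) iff there exists an $(X\cup E,U)$-separable mixed memory $\rho^\circ$ over $X\cup E\cup U$ with $\mathrm{supp}\,\rho^\circ\subseteq A$ and $\mathrm{tr}_{E\cup U}\rho^\circ=\rho$. *)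

(* Defs.v *)
(* R : realType (mathcomp-analysis reals), C := R[i]
   (complex numbers from mathcomp-real-closed).  Operators on l2[T] are
   represented by their matrices (kernels) w.r.t. the canonical basis. *)
From mathcomp Require Import all_boot all_order all_algebra.
From mathcomp Require Import reals.
From mathcomp.real_closed Require Import complex.
From Stdlib Require List.
Set Implicit Arguments.
Unset Strict Implicit.
Unset Printing Implicit Defensive.
Import Order.TTheory GRing.Theory Num.Theory.
Local Open Scope ring_scope.

Section Defs.
Variable R : realType.
Local Notation C := R[i].

(* Unconditional convergence of a family of complex numbers indexed by an
   arbitrary type: the net of finite partial sums converges to s. Finite
   subsets are duplicate-free lists. *)
Definition hasSum (I : Type) (f : I -> C) (s : C) : Prop :=
  forall e : C, 0 < e -> exists F0 : seq I,
    forall F : seq I, List.NoDup F -> (forall i, List.In i F0 -> List.In i F) ->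
      `|\sum_(i <- F) f i - s| < e.

Definition summable (I : Type) (f : I -> C) : Prop := exists s, hasSum f s.

Definition is_l2 (T : Type) (f : T -> C) : Prop :=
  summable (fun x => `|f x| ^+ 2).

Definition l2dist_lt (T : Type) (f g : T -> C) (e : C) : Prop :=
  exists s, hasSum (fun x => `|f x - g x| ^+ 2) s /\ s < e ^+ 2.

Definition in_closure (T : Type) (S : (T -> C) -> Prop) (f : T -> C) : Prop :=
  is_l2 f /\ forall e : C, 0 < e -> exists g, S g /\ l2dist_lt f g e.

Record predicate (T : Type) := Predicate {
  pred_mem :> (T -> C) -> Prop;
  pred_l2 : forall f, pred_mem f -> is_l2 f;
  pred_0 : pred_mem (fun _ => 0);
  pred_add : forall f g, pred_mem f -> pred_mem g -> pred_mem (fun x => f x + g x);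
  pred_scale : forall (a : C) f, pred_mem f -> pred_mem (fun x => a * f x);
  pred_closed : forall f, in_closure pred_mem f -> pred_mem f
}.

(* operators (matrices w.r.t. the canonical basis of l2[T]) *)
Definition kernel (T : Type) := T -> T -> C.

(* mixed memory = positive trace-class operator: positive semidefinite
   matrix with summable diagonal (finite trace). *)
Definition mixed (T : Type) (rho : kernel T) : Prop :=
  (forall (F : seq T) (c : T -> C),
      0 <= \sum_(x <- F) \sum_(y <- F) (c x)^* * rho x y * c y)
  /\ summable (fun x => rho x x).

Definition applies (T : Type) (rho : kernel T) (psi phi : T -> C) : Prop :=
  forall x, hasSum (fun y => rho x y * psi y) (phi x).

Definition range (T : Type) (rho : kernel T) : (T -> C) -> Prop :=
  fun phi => exists psi, is_l2 psi /\ applies rho psi phi.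

Definition supp_sub (T : Type) (rho : kernel T) (A : (T -> C) -> Prop) : Prop :=
  forall phi, in_closure (range rho) phi -> A phi.

Definition is_sum (I T : Type) (rhos : I -> kernel T) (sigma : kernel T) : Prop :=
  mixed sigma /\ forall x y, hasSum (fun i => rhos i x y) (sigma x y).

Definition tensor (T W : Type) (rho : kernel T) (rho' : kernel W) : kernel (T * W) :=
  fun p q => rho p.1 q.1 * rho' p.2 q.2.

(* (V,W)-separable mixed memory over V cup W (assignments = pairs) *)
Definition separable (V W : Type) (rho : kernel (V * W)) : Prop :=
  exists (I : Type) (r : I -> kernel V) (r' : I -> kernel W),
    (forall i, mixed (r i) /\ mixed (r' i)) /\
    is_sum (fun i => tensor (r i) (r' i)) rho.

(* satisfaction: rho over X satisfies A over X cup E cup U, assignments on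
   X cup E cup U being (X * E) * U *)
Definition sat (X E U : Type) (rho : kernel X) (A : predicate ((X * E) * U)) : Prop :=
  exists rho0 : kernel ((X * E) * U),
    mixed rho0 /\ separable rho0 /\ supp_sub rho0 A /\
    forall x x', hasSum (fun w : E * U => rho0 ((x, w.1), w.2) ((x', w.1), w.2))
                        (rho x x').

End Defs.

(* Main.v *)
Require Import Defs.
From mathcomp Require Import all_boot all_order all_algebra.
From mathcomp Require Import reals.
From mathcomp.real_closed Require Import complex.
From mathcomp Require Import classical_sets boolp.
From mathcomp Require Import ring lra.
From Stdlib Require List ClassicalEpsilon Eqdep.
Require Import Defs.
Set Implicit Arguments.
Unset Strict Implicit.
Unset Printing Implicit Defensive.
Import Order.TTheory GRing.Theory Num.Theory.
Local Open Scope ring_scope.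

Definition cdec (T : Type) (x y : T) : {x = y} + {x <> y} :=
  ClassicalEpsilon.excluded_middle_informative (x = y).
Definition Un (T : Type) (F1 F2 : seq T) := List.nodup (@cdec T) (List.app F1 F2).
Lemma Un_nodup T F1 F2 : List.NoDup (@Un T F1 F2).
Proof. exact: List.NoDup_nodup. Qed.
Lemma Un_In T F1 F2 x : List.In x (@Un T F1 F2) <-> List.In x F1 \/ List.In x F2.
Proof. rewrite /Un List.nodup_In; exact: List.in_app_iff. Qed.

Lemma big_app (T : Type) (V : nmodType) (f : T -> V) l1 l2 :
  \sum_(i <- List.app l1 l2) f i = \sum_(i <- l1) f i + \sum_(i <- l2) f i.
Proof.
elim: l1 => [|a l IH] /=; first by rewrite big_nil add0r.
by rewrite !big_cons IH addrA.
Qed.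

Lemma sum_ext_In (T : Type) (V : nmodType) (f g : T -> V) F :
  (forall i, List.In i F -> f i = g i) -> \sum_(i <- F) f i = \sum_(i <- F) g i.
Proof.
elim: F => [|a l IH] H; first by rewrite !big_nil.
rewrite !big_cons H /=; last by left.
by rewrite IH // => i Hi; apply: H; right.
Qed.

Lemma sum_ge0_In (T : Type) (V : numDomainType) (f : T -> V) F :
  (forall i, List.In i F -> 0 <= f i) -> 0 <= \sum_(i <- F) f i.
Proof.
elim: F => [|a l IH] H; first by rewrite big_nil.
rewrite big_cons addr_ge0 //; first by apply: H; left.
by apply: IH => i Hi; apply: H; right.
Qed.

Lemma sum_le_In (T : Type) (V : numDomainType) (f g : T -> V) F :
  (forall i, List.In i F -> f i <= g i) -> \sum_(i <- F) f i <= \sum_(i <- F) g i.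
Proof.
elim: F => [|a l IH] H; first by rewrite !big_nil.
rewrite !big_cons lerD //; first by apply: H; left.
by apply: IH => i Hi; apply: H; right.
Qed.

Lemma sum_incl_le (T : Type) (V : numDomainType) (f : T -> V) F0 F :
  (forall i, List.In i F -> 0 <= f i) -> List.NoDup F0 -> List.NoDup F ->
  List.incl F0 F -> \sum_(i <- F0) f i <= \sum_(i <- F) f i.
Proof.
elim: F0 F => [|a l IH] F Hf N0 N Hi.
  by rewrite big_nil; apply: sum_ge0_In.
have aF : List.In a F by apply: Hi; left.
have [l1 [l2 E]] := List.in_split a F aF.
subst F.
have Nl : List.NoDup (List.app l1 l2) by apply: List.NoDup_remove_1 N.
move: N0; rewrite List.NoDup_cons_iff => -[anl Nl0].
have Hi' : List.incl l (List.app l1 l2).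
  move=> x xl.
  have : List.In x (List.app l1 (a :: l2)) by apply: Hi; right.
  rewrite !List.in_app_iff /= => -[|[|]]; auto.
  by move=> E; subst x.
have Hf' : forall i, List.In i (List.app l1 l2) -> 0 <= f i.
  move=> i; rewrite List.in_app_iff => -[H|H]; apply: Hf;
  rewrite List.in_app_iff /=; auto.
have := IH _ Hf' Nl0 Nl Hi'.
rewrite big_cons !big_app big_cons => H.
by rewrite addrCA lerD2l.
Qed.

Section Sums.
Variable R : realType.
Local Notation C := R[i].

Definition inP (T : Type) (P : T -> Prop) (F : seq T) := forall i, List.In i F -> P i.

Definition hasSumR (T : Type) (P : T -> Prop) (f : T -> C) (s : C) : Prop :=
  forall e : C, 0 < e -> exists F0 : seq T, inP P F0 /\
    forall F : seq T, List.NoDup F -> inP P F -> List.incl F0 F ->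
      `|\sum_(i <- F) f i - s| < e.

Lemma hasSumRT (T : Type) (f : T -> C) s :
  hasSum f s <-> hasSumR (fun _ => True) f s.
Proof.
split=> H e e0.
  by have [F0 H0] := H e e0; exists F0; split => // F N _ Hi; apply: H0.
by have [F0 [_ H0]] := H e e0; exists F0 => F N Hi; apply: H0.
Qed.

Lemma inP_Un T (P : T -> Prop) F1 F2 : inP P F1 -> inP P F2 -> inP P (Un F1 F2).
Proof. by move=> H1 H2 i /Un_In [] ?; [apply: H1|apply: H2]. Qed.

Lemma incl_Unl T (F1 F2 : seq T) : List.incl F1 (Un F1 F2).
Proof. by move=> i Hi; apply/Un_In; left. Qed.
Lemma incl_Unr T (F1 F2 : seq T) : List.incl F2 (Un F1 F2).
Proof. by move=> i Hi; apply/Un_In; right. Qed.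

Lemma small0 (z : C) : (forall e : C, 0 < e -> `|z| < e) -> z = 0.
Proof.
move=> H; apply/eqP; apply/negPn/negP => nz.
have := H `|z|; rewrite normr_gt0 nz ltxx => /(_ isT); done.
Qed.

Lemma half_gt0 (e : C) : 0 < e -> 0 < e / 2%:R.
Proof. by move=> e0; rewrite divr_gt0 // ltr0n. Qed.

Lemma hasSumR_unique T (P : T -> Prop) f s t :
  hasSumR P f s -> hasSumR P f t -> s = t.
Proof.
move=> Hs Ht; apply/eqP; rewrite -subr_eq0; apply/eqP; apply: small0 => e e0.
have [F1 [P1 H1]] := Hs _ (half_gt0 e0).
have [F2 [P2 H2]] := Ht _ (half_gt0 e0).
have N := Un_nodup F1 F2.
have PP := inP_Un P1 P2.
have A := H1 _ N PP (@incl_Unl _ _ _).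
have B := H2 _ N PP (@incl_Unr _ _ _).
rewrite [e]splitr.
apply: le_lt_trans (ler_distD (\sum_(i <- Un F1 F2) f i) _ _) _.
by rewrite distrC ltrD.
Qed.

Lemma hasSumR_ext T (P : T -> Prop) f g s :
  (forall i, P i -> f i = g i) -> hasSumR P f s -> hasSumR P g s.
Proof.
move=> E H e e0; have [F0 [P0 H0]] := H e e0; exists F0; split => // F N PF I.
rewrite -(sum_ext_In (f := f)); first exact: H0.
by move=> i /PF; apply: E.
Qed.

Lemma hasSumR_add T (P : T -> Prop) f g s t :
  hasSumR P f s -> hasSumR P g t -> hasSumR P (fun i => f i + g i) (s + t).
Proof.
move=> Hs Ht e e0.
have [F1 [P1 H1]] := Hs _ (half_gt0 e0).
have [F2 [P2 H2]] := Ht _ (half_gt0 e0).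
exists (Un F1 F2); split; first exact: inP_Un.
move=> F N PF I.
have A := H1 _ N PF (List.incl_tran (@incl_Unl _ _ _) I).
have B := H2 _ N PF (List.incl_tran (@incl_Unr _ _ _) I).
rewrite big_split /= [e]splitr.
have -> : \sum_(i <- F) f i + \sum_(i <- F) g i - (s + t) =
  (\sum_(i <- F) f i - s) + (\sum_(i <- F) g i - t) by ring.
by apply: le_lt_trans (ler_normD _ _) _; rewrite ltrD.
Qed.

Lemma hasSumR_scale T (P : T -> Prop) f s (c : C) :
  hasSumR P f s -> hasSumR P (fun i => c * f i) (c * s).
Proof.
move=> H e e0.
have c1 : 0 < `|c| + 1 by rewrite ltr_wpDl.
have [F0 [P0 H0]] := H (e / (`|c| + 1)) (divr_gt0 e0 c1).
exists F0; split => // F N PF I.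
have A := H0 F N PF I.
rewrite -mulr_sumr -mulrBr normrM.
apply: (@le_lt_trans _ _ ((`|c| + 1) * `|\sum_(i <- F) f i - s|)).
  by rewrite ler_wpM2r // lerDl.
by rewrite mulrC -ltr_pdivlMr.
Qed.

Lemma hasSumR_zero T (P : T -> Prop) : hasSumR P (fun _ => 0) 0.
Proof.
move=> e e0; exists [::]; split => // F _ _ _.
by rewrite big1 // subr0 normr0.
Qed.

Lemma hasSumR_opp T (P : T -> Prop) f s :
  hasSumR P f s -> hasSumR P (fun i => - f i) (- s).
Proof.
move=> H; rewrite -mulN1r.
by apply: hasSumR_ext (hasSumR_scale (-1) H) => i _; rewrite mulN1r.
Qed.

Lemma hasSumR_ext2 T (P : T -> Prop) f s t :
  s = t -> hasSumR P f s -> hasSumR P f t.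
Proof. by move->. Qed.

Lemma hasSumR_sub T (P : T -> Prop) f g s t :
  hasSumR P f s -> hasSumR P g t -> hasSumR P (fun i => f i - g i) (s - t).
Proof. by move=> Hs Ht; apply: hasSumR_add Hs (hasSumR_opp Ht). Qed.

Lemma hasSumR_big T T' (P : T -> Prop) (L : seq T') (f : T' -> T -> C) s :
  (forall t, hasSumR P (f t) (s t)) ->
  hasSumR P (fun i => \sum_(t <- L) f t i) (\sum_(t <- L) s t).
Proof.
move=> H; elim: L => [|a L IH].
  rewrite big_nil; apply: hasSumR_ext (hasSumR_zero P) => i _; by rewrite big_nil.
rewrite big_cons; apply: hasSumR_ext (hasSumR_add (H a) IH) => i _.
by rewrite big_cons.
Qed.

Lemma closed_ge0 (x : C) :
  (forall e : C, 0 < e -> exists y, 0 <= y /\ `|y - x| < e) -> 0 <= x.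
Proof.
move=> H.
suff E : `|x| = x by rewrite -E normr_ge0.
apply/eqP; rewrite -subr_eq0; apply/eqP; apply: small0 => e e0.
have [y [y0 Hy]] := H (e / 2%:R) (half_gt0 e0).
have -> : `|x| - x = (`|x| - `|y|) + (y - x) by rewrite (ger0_norm y0); ring.
apply: le_lt_trans (ler_normD _ _) _.
rewrite [e]splitr; apply: ler_ltD => //.
apply: le_trans (ler_dist_dist _ _) _.
by rewrite distrC; apply: ltW.
Qed.

Lemma lim_ge T (P : T -> Prop) f s F0 :
  (forall i, P i -> 0 <= f i) -> hasSumR P f s -> List.NoDup F0 -> inP P F0 ->
  \sum_(i <- F0) f i <= s.
Proof.
move=> f0 H N0 P0; rewrite -subr_ge0; apply: closed_ge0 => e e0.
have [F1 [P1 H1]] := H e e0.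
exists (\sum_(i <- Un F1 F0) f i - \sum_(i <- F0) f i); split.
  rewrite subr_ge0; apply: sum_incl_le => //.
  - by move=> i /(inP_Un P1 P0); apply: f0.
  - exact: Un_nodup.
  - exact: incl_Unr.
have -> : \sum_(i <- Un F1 F0) f i - \sum_(i <- F0) f i - (s - \sum_(i <- F0) f i)
  = \sum_(i <- Un F1 F0) f i - s by ring.
by apply: H1; [exact: Un_nodup|exact: inP_Un|exact: incl_Unl].
Qed.

Lemma lim_ge0 T (P : T -> Prop) f s :
  (forall i, P i -> 0 <= f i) -> hasSumR P f s -> 0 <= s.
Proof.
move=> f0 H; have := @lim_ge _ _ _ _ [::] f0 H (List.NoDup_nil _).
by rewrite big_nil; apply.
Qed.

Lemma lim_mono T (P : T -> Prop) f g s t :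
  (forall i, P i -> f i <= g i) -> hasSumR P f s -> hasSumR P g t -> s <= t.
Proof.
move=> fg Hs Ht; rewrite -subr_ge0.
apply: (@lim_ge0 _ P (fun i => g i - f i) (t - s)); last exact: hasSumR_sub.
by move=> i /fg; rewrite subr_ge0.
Qed.

Lemma lim_le_bound T (P : T -> Prop) f s B :
  (forall F, List.NoDup F -> inP P F -> \sum_(i <- F) f i <= B) ->
  hasSumR P f s -> s <= B.
Proof.
move=> HB H; rewrite -subr_ge0; apply: closed_ge0 => e e0.
have [F1 [P1 H1]] := H e e0.
exists (B - \sum_(i <- Un F1 [::]) f i); split.
  rewrite subr_ge0; apply: HB; [exact: Un_nodup|exact: inP_Un].
have -> : B - \sum_(i <- Un F1 [::]) f i - (B - s) = - (\sum_(i <- Un F1 [::]) f i - s)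
  by ring.
by rewrite normrN; apply: H1; [exact: Un_nodup|exact: inP_Un|exact: incl_Unl].
Qed.

Lemma normC_real (x : R) : `|(x%:C)%C| = ((`|x|)%:C)%C :> C.
Proof. by rewrite normc_def /= expr0n /= addr0 sqrtr_sqr. Qed.

Lemma sup_exists T (P : T -> Prop) (u : T -> R) (b : R) :
  (forall i, P i -> 0 <= u i) ->
  (forall F, List.NoDup F -> inP P F -> \sum_(i <- F) u i <= b) ->
  exists s : R, hasSumR P (fun i => (u i)%:C%C) s%:C%C.
Proof.
move=> u0 Hb.
pose E : set R := fun x => exists F, List.NoDup F /\ inP P F /\ x = \sum_(i <- F) u i.
have hs : has_sup E.
  split; first by exists 0; exists [::]; split; [exact: List.NoDup_nil|split=> //; rewrite big_nil].
  by exists b => x [F [N [PF ->]]]; apply: Hb.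
exists (sup E) => -[a c]; rewrite ltcE /= => /andP[/eqP c0 a0].
subst c.
have [x [F0 [N0 [P0 ->]]] Hx] := sup_adherent a0 hs.
exists F0; split => // F N PF I.
rewrite -rmorph_sum -rmorphB normC_real complexr0 ltcR.
have h1 : \sum_(i <- F0) u i <= \sum_(i <- F) u i.
  by apply: sum_incl_le => // i /PF; apply: u0.
have h2 : \sum_(i <- F) u i <= sup E.
  by apply: (sup_upper_bound hs); exists F.
rewrite ler0_norm; first by lra.
by rewrite subr_le0.
Qed.

Definition nr (z : C) : R := Num.sqrt (complex.Re z ^+ 2 + complex.Im z ^+ 2).

Lemma normE (z : C) : `|z| = (nr z)%:C%C.
Proof. exact: normc_def. Qed.

Lemma nr_ge0 z : 0 <= nr z.
Proof. exact: sqrtr_ge0. Qed.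

Lemma nr_Re z : `|complex.Re z| <= nr z.
Proof.
rewrite /nr -sqrtr_sqr ler_wsqrtr // lerDl; exact: sqr_ge0.
Qed.

Lemma nr_Im z : `|complex.Im z| <= nr z.
Proof.
rewrite /nr -sqrtr_sqr ler_wsqrtr // lerDr; exact: sqr_ge0.
Qed.

Lemma nrM z w : nr (z * w) = nr z * nr w.
Proof.
by apply: complexI; rewrite rmorphM /= -!normE normrM.
Qed.

Lemma nrD z w : nr (z + w) <= nr z + nr w.
Proof. by rewrite -lecR rmorphD /= -!normE ler_normD. Qed.

Lemma abs_exists T (P : T -> Prop) (f : T -> C) (b : R) :
  (forall F, List.NoDup F -> inP P F -> \sum_(i <- F) nr (f i) <= b) ->
  exists s, hasSumR P f s.
Proof.
move=> Hb.
have b0 : 0 <= b by have := Hb [::] (List.NoDup_nil _); rewrite big_nil; apply.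
have [s1 H1] : exists s1 : R, hasSumR P (fun i => (nr (f i) + complex.Re (f i))%:C%C) s1%:C%C.
  apply: (@sup_exists _ P _ (b + b)).
  - move=> i _; have := nr_Re (f i); rewrite ler_norml; lra.
  - move=> F N PF; rewrite big_split /=; apply: lerD; first exact: Hb.
    apply: le_trans (Hb F N PF); apply: sum_le_In => i _.
    exact: le_trans (ler_norm _) (nr_Re _).
have [s2 H2] : exists s2 : R, hasSumR P (fun i => (nr (f i))%:C%C) s2%:C%C.
  apply: (@sup_exists _ P _ b).
  - by move=> i _; apply: nr_ge0.
  - exact: Hb.
have [s3 H3] : exists s3 : R, hasSumR P (fun i => (nr (f i) + complex.Im (f i))%:C%C) s3%:C%C.
  apply: (@sup_exists _ P _ (b + b)).
  - move=> i _; have := nr_Im (f i); rewrite ler_norml; lra.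
  - move=> F N PF; rewrite big_split /=; apply: lerD; first exact: Hb.
    apply: le_trans (Hb F N PF); apply: sum_le_In => i _.
    exact: le_trans (ler_norm _) (nr_Im _).
exists ((s1%:C - s2%:C) + 'i * (s3%:C - s2%:C))%C.
apply: hasSumR_ext (hasSumR_add (hasSumR_sub H1 H2)
                     (hasSumR_scale 'i%C (hasSumR_sub H3 H2))) => i _.
rewrite -!rmorphB /= [RHS]complexE.
have -> : nr (f i) + complex.Re (f i) - nr (f i) = complex.Re (f i) by ring.
have -> : nr (f i) + complex.Im (f i) - nr (f i) = complex.Im (f i) by ring.
by [].
Qed.

End Sums.



Lemma big_lmap (T T' : Type) (V : nmodType) (f : T' -> V) (φ : T -> T') l :
  \sum_(i <- List.map φ l) f i = \sum_(j <- l) f (φ j).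
Proof. by elim: l => [|a l IH] /=; rewrite ?big_nil // !big_cons IH. Qed.

Lemma big_flat (T T' : Type) (V : nmodType) (f : T' -> V) (G : T -> seq T') l :
  \sum_(i <- List.flat_map G l) f i = \sum_(j <- l) \sum_(i <- G j) f i.
Proof. by elim: l => [|a l IH] /=; rewrite ?big_nil // big_app big_cons IH. Qed.

Definition fb (K I : Type) (π : K -> I) (i : I) (k : K) : bool :=
  if cdec (π k) i then true else false.

Lemma fbP K I (π : K -> I) i k : fb π i k = true <-> π k = i.
Proof. by rewrite /fb; case: cdec. Qed.

Lemma filter_fbP K I (π : K -> I) i k F :
  List.In k (List.filter (fb π i) F) <-> List.In k F /\ π k = i.
Proof. by rewrite List.filter_In fbP. Qed.

Section Fub.
Variable R : realType.
Local Notation C := R[i].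

Lemma sum_le_const (T : Type) (F : seq T) (f : T -> C) (d : C) :
  (forall i, List.In i F -> f i <= d) -> \sum_(i <- F) f i <= (size F)%:R * d.
Proof.
elim: F => [|a l IH] H /=; first by rewrite big_nil mul0r.
rewrite big_cons -addn1 natrD mulrDl mul1r addrC lerD //.
  by apply: IH => i Hi; apply: H; right.
by apply: H; left.
Qed.

Lemma frac_le (n : nat) (x : C) : 0 <= x -> n%:R * (x / (n.+1)%:R) <= x.
Proof.
move=> x0; rewrite mulrCA ler_piMr // ler_pdivrMr ?ltr0n // mul1r ler_nat.
by [].
Qed.

Lemma hasSum_inj (J K : Type) (φ : J -> K) (P : K -> Prop) (g : K -> C) s :
  (forall a b, φ a = φ b -> a = b) -> (forall j, P (φ j)) ->
  (forall k, P k -> exists j, φ j = k) ->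
  hasSum (fun j => g (φ j)) s -> hasSumR P g s.
Proof.
move=> inj Pφ sur H e e0.
have [F0 H0] := H e e0.
exists (List.map φ F0); split.
  by move=> k /List.in_map_iff [j [<- _]].
move=> F N PF I.
have [F' EF] : exists F', List.map φ F' = F.
  elim: F PF {N I} => [|a l IH] PF; first by exists [::].
  have [l' El] : exists l', List.map φ l' = l by apply: IH => i Hi; apply: PF; right.
  have [j Ej] := sur a (PF a (or_introl erefl)).
  by exists (j :: l'); rewrite /= Ej El.
subst F.
rewrite big_lmap; apply: H0; first exact: List.NoDup_map_inv N.
move=> j Hj.
have : List.In (φ j) (List.map φ F') by apply: I; apply: List.in_map.
by move=> /List.in_map_iff [j' [/inj -> ?]].
Qed.

Lemma hasSum_ext (T : Type) (f g : T -> C) s :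
  (forall i, f i = g i) -> hasSum f s -> hasSum g s.
Proof.
by move=> E /hasSumRT H; apply/hasSumRT; apply: hasSumR_ext H => i _.
Qed.

Lemma hasSum_swap (I W : Type) (G : I * W -> C) s :
  hasSum G s -> hasSum (fun q : W * I => G (q.2, q.1)) s.
Proof.
move=> H; apply/hasSumRT.
apply: (@hasSum_inj _ _ (fun p : I * W => (p.2, p.1))) => //.
- by move=> [a b] [c d] /= [-> ->].
- by move=> [a b] _; exists (b, a).
- by apply: hasSum_ext H => -[a b].
Qed.

Lemma fiber_pair (I W : Type) (g : I * W -> C) i s :
  hasSum (fun w => g (i, w)) s -> hasSumR (fun k : I * W => k.1 = i) g s.
Proof.
apply: (@hasSum_inj _ _ (fun w => (i, w))) => //.
- by move=> a b [].
- by move=> [a b] /= ->; exists b.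
Qed.

Lemma NoDup_flat (K I : Type) (π : K -> I) (G : I -> seq K) F :
  (forall i k, List.In k (G i) -> π k = i) -> (forall i, List.NoDup (G i)) ->
  List.NoDup F -> List.NoDup (List.flat_map G F).
Proof.
move=> GP NG; elim: F => [|a l IH] /=; first by constructor.
move=> /List.NoDup_cons_iff [al Nl].
apply: List.NoDup_app; [exact: NG|exact: IH|].
move=> k /GP ka /List.in_flat_map [x [xl /GP kx]].
by apply: al; rewrite -ka kx.
Qed.

Lemma fubini (K I : Type) (π : K -> I) (g : K -> C) s (h : I -> C) :
  hasSum g s -> (forall i, hasSumR (fun k => π k = i) g (h i)) -> hasSum h s.
Proof.
move=> /hasSumRT Hs Hh e e0.
have [F0 [_ H0]] := Hs _ (half_gt0 e0).
exists (List.map π F0) => F N Inc.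
pose n := size F.
pose d := e / 2%:R / (n.+1)%:R.
have d0 : 0 < d by rewrite /d divr_gt0 ?ltr0n ?half_gt0.
have [G0 HG0] := choice (fun i => Hh i d d0).
pose G i := Un (G0 i) (List.filter (fb π i) F0).
have GP : forall i k, List.In k (G i) -> π k = i.
  move=> i k /Un_In [/(proj1 (HG0 i))|/filter_fbP []] //.
have HG : forall i, `|\sum_(k <- G i) g k - h i| < d.
  move=> i; apply: (proj2 (HG0 i)); first exact: Un_nodup.
    by move=> k /GP.
  exact: incl_Unl.
pose L := List.flat_map G F.
have NL : List.NoDup L.
  by apply: (NoDup_flat GP) => // i; apply: Un_nodup.
have IL : List.incl F0 L.
  move=> k k0; apply/List.in_flat_map; exists (π k); split.
    by apply: Inc; apply: List.in_map.
  by apply: incl_Unr; apply/filter_fbP.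
have A := H0 L NL (fun _ _ => Logic.I) IL.
have -> : \sum_(i <- F) h i - s =
   (\sum_(i <- F) (h i - \sum_(k <- G i) g k)) + (\sum_(k <- L) g k - s).
  by rewrite big_flat sumrB; ring.
rewrite [e]splitr; apply: le_lt_trans (ler_normD _ _) _.
apply: ler_ltD => //.
apply: le_trans (ler_norm_sum _ _ _) _.
apply: le_trans (@sum_le_const _ F _ d _) _.
  by move=> i _; rewrite distrC; apply: ltW.
apply: frac_le; apply: ltW; exact: half_gt0.
Qed.

Lemma sum_zero_In (T : Type) (f : T -> C) F :
  (forall i, List.In i F -> f i = 0) -> \sum_(i <- F) f i = 0.
Proof. by move=> H; rewrite (sum_ext_In (g := fun _ => 0)) // big1. Qed.

Lemma sum_if_eq (I : Type) (a : I) (P : seq I) (x : C) :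
  List.NoDup P -> List.In a P ->
  \sum_(i <- P) (if cdec a i then x else 0) = x.
Proof.
elim: P => [|b P IH] //= /List.NoDup_cons_iff [bP NP] aP.
rewrite big_cons; case: cdec => [ab|nab].
  subst b; rewrite sum_zero_In ?addr0 // => i iP.
  by case: cdec => // ai; subst i.
by rewrite add0r IH //; case: aP => // ba; exfalso; apply: nab.
Qed.

Lemma group_sum (K I : Type) (π : K -> I) (g : K -> C) F (P : seq I) :
  List.NoDup P -> (forall k, List.In k F -> List.In (π k) P) ->
  \sum_(k <- F) g k = \sum_(i <- P) \sum_(k <- List.filter (fb π i) F) g k.
Proof.
move=> NP; elim: F => [|k F IH] H.
  by rewrite big_nil sum_zero_In // => i _; rewrite big_nil.
rewrite big_cons IH; last by move=> k' Hk'; apply: H; right.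
have -> : \sum_(i <- P) \sum_(k0 <- List.filter (fb π i) (k :: F)) g k0 =
  \sum_(i <- P) ((if cdec (π k) i then g k else 0) +
                 \sum_(k0 <- List.filter (fb π i) F) g k0).
  apply: sum_ext_In => i _ /=; rewrite /fb; case: cdec => [e1|e1].
    by rewrite big_cons.
  by rewrite add0r.
by rewrite big_split /= sum_if_eq //; apply: H; left.
Qed.

Lemma fiber_bound (K I : Type) (π : K -> I) (g : K -> C) (h : I -> C) t :
  (forall k, 0 <= g k) -> (forall i, hasSumR (fun k => π k = i) g (h i)) ->
  hasSum h t -> forall F, List.NoDup F -> \sum_(k <- F) g k <= t.
Proof.
move=> g0 Hh /hasSumRT Ht F N.
pose P := Un (List.map π F) [::].
rewrite (@group_sum _ _ π g F P); first last.
- by move=> k Hk; apply: incl_Unl; apply: List.in_map.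
- exact: Un_nodup.
have h0 : forall i, 0 <= h i by move=> i; apply: (lim_ge0 _ (Hh i)).
apply: le_trans (@lim_ge _ _ _ h t P (fun i _ => h0 i) Ht (Un_nodup _ _) (fun _ _ => Logic.I)).
apply: sum_le_In => i _.
apply: (lim_ge _ (Hh i)) => //.
  exact: List.NoDup_filter.
by move=> k /filter_fbP [].
Qed.

End Fub.



Section PSD.
Variable R : realType.
Local Notation C := R[i].

Definition psd (T : Type) (rho : kernel R T) : Prop :=
  forall (F : seq T) (c : T -> C),
      0 <= \sum_(x <- F) \sum_(y <- F) (c x)^* * rho x y * c y.

Lemma quad2 T (rho : kernel R T) p q (α β : C) : psd rho -> p <> q ->
  0 <= α^* * rho p p * α + α^* * rho p q * β + (β^* * rho q p * α + β^* * rho q q * β).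
Proof.
move=> H pq; have := H [:: p; q] (fun z => if cdec z p then α else β).
rewrite !big_cons !big_nil; case: cdec => // pp; case: cdec => [qp|nqp]; first by exfalso; apply: pq.
by rewrite !addr0 addrA.
Qed.

Lemma psd_diag T (rho : kernel R T) p : psd rho -> 0 <= rho p p.
Proof.
move=> H; have := H [:: p] (fun _ => 1).
by rewrite !big_cons !big_nil !addr0 conjC1 mul1r mulr1.
Qed.

Lemma psd_diag_real T (rho : kernel R T) p : psd rho ->
  rho p p = (complex.Re (rho p p))%:C%C.
Proof.
move=> /(psd_diag p); case: (rho p p) => a b; rewrite lecE /= => /andP[/eqP -> _].
by [].
Qed.

Lemma psd2 T (rho : kernel R T) p q : psd rho -> p <> q ->
  rho q p = (rho p q)^* /\
  nr (rho p q) ^+ 2 <= complex.Re (rho p p) * complex.Re (rho q q).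
Proof.
move=> H pq; have Q := fun a b => @quad2 T rho p q a b H pq.
rewrite /nr.
move: Q; case: (rho p p) => a1 a2; case: (rho p q) => r1 r2;
  case: (rho q p) => s1 s2; case: (rho q q) => b1 b2 => Q.
have h1 := Q 1 0. have h2 := Q 0 1. have h3 := Q 1 1. have h4 := Q 1 'i%C.
move: h1 h2 h3 h4; rewrite !lecE /= => /andP[/eqP e1 i1] /andP[/eqP e2 i2]
  /andP[/eqP e3 i3] /andP[/eqP e4 i4].
have a20 : a2 = 0 by lra.
have b20 : b2 = 0 by lra.
have s2E : s2 = - r2 by lra.
have s1E : s1 = r1 by lra.
subst a2 b2 s2 s1.
split; first by [].
rewrite /= sqr_sqrtr; last by rewrite addr_ge0 // sqr_ge0.
set N := r1 ^+ 2 + r2 ^+ 2.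
have N0 : 0 <= N by rewrite /N addr_ge0 // sqr_ge0.
have a10 : 0 <= a1 by lra.
have b10 : 0 <= b1 by lra.
have h5 := Q (b1%:C)%C (- (r1 -i* r2))%C.
have h6 := Q (N%:C)%C (- ((a1 + 1)%:C)%C * (r1 -i* r2))%C.
move: h5 h6; rewrite !lecE /= => /andP[_ i5] /andP[_ i6].
have j5 : 0 <= b1 * (a1 * b1 - N) by rewrite /N; lra.
have j6 : 0 <= - (N ^+ 2 * (a1 + 2)) + (a1 + 1) ^+ 2 * N * b1 by rewrite /N in i6 *; lra.
have [b1p|b1z] : 0 < b1 \/ b1 = 0 by lra.
  by move: j5; rewrite pmulr_rge0 // subr_ge0 mulrC.
subst b1; rewrite mulr0.
have : N ^+ 2 * (a1 + 2) <= 0 by lra.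
have : 0 <= N ^+ 2 * (a1 + 2) by rewrite mulr_ge0 // ?sqr_ge0 //; lra.
nra.
Qed.

End PSD.



Lemma CS_sq (T : Type) (R : realFieldType) (F : seq T) (x y : T -> R) (a b : R) :
  \sum_(i <- F) (a * x i + b * y i) ^+ 2 =
  a ^+ 2 * \sum_(i <- F) x i ^+ 2 + 2 * a * b * \sum_(i <- F) (x i * y i)
  + b ^+ 2 * \sum_(i <- F) y i ^+ 2.
Proof.
rewrite !mulr_sumr -!big_split /=; apply: eq_bigr => i _; ring.
Qed.

Lemma CS (T : Type) (R : realFieldType) (F : seq T) (x y : T -> R) :
  (\sum_(i <- F) x i * y i) ^+ 2 <=
  (\sum_(i <- F) x i ^+ 2) * (\sum_(i <- F) y i ^+ 2).
Proof.
set A := \sum_(i <- F) x i ^+ 2; set B := \sum_(i <- F) x i * y i;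
set D := \sum_(i <- F) y i ^+ 2.
have A0 : 0 <= A by rewrite /A sumr_ge0 // => i _; apply: sqr_ge0.
have D0 : 0 <= D by rewrite /D sumr_ge0 // => i _; apply: sqr_ge0.
have q : forall a b, 0 <= a ^+ 2 * A + 2 * a * b * B + b ^+ 2 * D.
  by move=> a b; rewrite /A /B /D -CS_sq sumr_ge0 // => i _; apply: sqr_ge0.
have h1 := q D (- B). have h2 := q B (- A). have h3 := q 1 (-1). have h4 := q 1 1.
have [Dp|Dz] : 0 < D \/ D = 0 by lra.
  have : 0 <= D * (A * D - B ^+ 2) by nra.
  by rewrite pmulr_rge0 // subr_ge0 mulrC.
have [Ap|Az] : 0 < A \/ A = 0 by lra.
  have : 0 <= A * (A * D - B ^+ 2) by nra.
  by rewrite pmulr_rge0 // subr_ge0 mulrC.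
rewrite Dz Az in h3 h4 *; have -> : B = 0 by lra.
by rewrite expr0n mulr0.
Qed.

Section Ops.
Variable R : realType.
Local Notation C := R[i].

Lemma ge0_real (z : C) : 0 <= z -> z = (complex.Re z)%:C%C.
Proof. by case: z => a b; rewrite lecE /= => /andP[/eqP -> _]. Qed.

Lemma ge0_Re (z : C) : 0 <= z -> 0 <= complex.Re z.
Proof. by case: z => a b; rewrite lecE /= => /andP[_ ->]. Qed.

Lemma le_Re (z w : C) : z <= w -> complex.Re z <= complex.Re w.
Proof. by rewrite lecE => /andP[_ ->]. Qed.

Lemma nr_real (z : C) : 0 <= z -> nr z = complex.Re z.
Proof.
case: z => a b; rewrite lecE /= => /andP[/eqP -> a0].
by rewrite /nr /= expr0n addr0 sqrtr_sqr ger0_norm.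
Qed.

Lemma Re_sum (T : Type) (F : seq T) (f : T -> C) :
  complex.Re (\sum_(i <- F) f i) = \sum_(i <- F) complex.Re (f i).
Proof.
elim: F => [|a l IH]; first by rewrite !big_nil.
by rewrite !big_cons -IH; case: (f a); case: (\sum_(i <- l) f i).
Qed.

Lemma nr_sum (T : Type) (F : seq T) (f : T -> C) :
  nr (\sum_(i <- F) f i) <= \sum_(i <- F) nr (f i).
Proof.
elim: F => [|a l IH].
  by rewrite !big_nil /nr /= expr0n addr0 sqrtr0.
rewrite !big_cons; apply: le_trans (nrD _ _) _; exact: lerD.
Qed.

Lemma normX2 (z : C) : `|z| ^+ 2 = ((nr z) ^+ 2)%:C%C.
Proof. by rewrite normE rmorphXn. Qed.

Lemma nrB (z w : C) : nr (z - w) = nr (w - z).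
Proof. by apply: complexI; rewrite -!normE distrC. Qed.

Lemma psd_cs (T : Type) (rho : kernel R T) p q : psd rho ->
  nr (rho p q) ^+ 2 <= complex.Re (rho p p) * complex.Re (rho q q).
Proof.
move=> H; case: (cdec p q) => [<-|pq]; last by case: (psd2 H pq).
by rewrite nr_real ?expr2 //; apply: psd_diag.
Qed.

Lemma amgm (n a b : R) : 0 <= n -> 0 <= a -> 0 <= b -> n ^+ 2 <= a * b ->
  n <= (a + b) / 2.
Proof.
move=> n0 a0 b0 h.
have m0 : 0 <= (a + b) / 2 by rewrite divr_ge0 // addr_ge0.
rewrite -(@ler_pXn2r _ 2) // ?nnegrE //.
apply: le_trans h _.
have -> : ((a + b) / 2) ^+ 2 = a * b + ((a - b) / 2) ^+ 2 by field.
by rewrite lerDl sqr_ge0.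
Qed.

Lemma psd_amgm (T : Type) (rho : kernel R T) p q : psd rho ->
  nr (rho p q) <= (complex.Re (rho p p) + complex.Re (rho q q)) / 2.
Proof.
move=> H; apply: amgm; [exact: nr_ge0| | |exact: psd_cs].
- exact/ge0_Re/psd_diag.
- exact/ge0_Re/psd_diag.
Qed.

Lemma le_from_eps (a b : R) : (forall e, 0 < e -> a < b + e) -> a <= b.
Proof.
move=> H; rewrite leNgt; apply/negP => ba.
have := H ((a - b) / 2); rewrite divr_gt0 ?subr_gt0 // => /(_ isT); lra.
Qed.

Lemma diag_partial (T : Type) (rho : kernel R T) (t : R) G :
  psd rho -> hasSum (fun x => rho x x) t%:C%C -> List.NoDup G ->
  \sum_(y <- G) complex.Re (rho y y) <= t.
Proof.
move=> H /hasSumRT Ht N; rewrite -Re_sum -[t]/(complex.Re t%:C%C); apply: le_Re.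
apply: (lim_ge _ Ht) => // y _; exact: psd_diag.
Qed.

Lemma l2_partial (T : Type) (psi : T -> C) (n2 : R) G :
  hasSum (fun y => `|psi y| ^+ 2) n2%:C%C -> List.NoDup G ->
  \sum_(y <- G) nr (psi y) ^+ 2 <= n2.
Proof.
move=> /hasSumRT Ht N; rewrite -lecR rmorph_sum /=.
rewrite (sum_ext_In (g := fun y => `|psi y| ^+ 2)); last by move=> y _; rewrite normX2.
by apply: (lim_ge _ Ht) => // y _; apply: exprn_ge0.
Qed.

Lemma apply_exists (T : Type) (rho : kernel R T) (t n2 : R) psi :
  psd rho -> hasSum (fun x => rho x x) t%:C%C ->
  hasSum (fun y => `|psi y| ^+ 2) n2%:C%C -> exists phi, applies rho psi phi.
Proof.
move=> H Ht Hn.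
suff Hx : forall x, exists s, hasSumR (fun _ => True) (fun y => rho x y * psi y) s.
  have [phi Hphi] := choice Hx.
  by exists phi => x; apply/hasSumRT; apply: Hphi.
move=> x; apply: (@abs_exists R T _ _ ((complex.Re (rho x x) * t + n2) / 2)).
move=> F N _.
apply: (@le_trans _ _ (\sum_(y <- F) (nr (rho x y) ^+ 2 + nr (psi y) ^+ 2) / 2)).
  apply: sum_le_In => y _; rewrite nrM; apply: amgm;
    [by rewrite mulr_ge0 ?nr_ge0|exact: sqr_ge0|exact: sqr_ge0|by rewrite exprMn].
rewrite -mulr_suml big_split /= ler_pM2r ?invr_gt0 ?ltr0n //.
apply: lerD; last exact: l2_partial.
apply: (@le_trans _ _ (\sum_(y <- F) complex.Re (rho x x) * complex.Re (rho y y))).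
  by apply: sum_le_In => y _; apply: psd_cs.
rewrite -mulr_sumr ler_wpM2l //; first exact/ge0_Re/psd_diag.
exact: diag_partial.
Qed.

End Ops.



Section HSs.
Variable R : realType.
Local Notation C := R[i].

Lemma le_sqrt_of_sq (n B : R) : 0 <= n -> 0 <= B -> n ^+ 2 <= B -> n <= Num.sqrt B.
Proof.
move=> n0 B0 h; rewrite -(ger0_norm n0) -sqrtr_sqr ler_sqrt //.
Qed.

Lemma sq_of_le_sqrt (n B : R) : 0 <= n -> 0 <= B -> n <= Num.sqrt B -> n ^+ 2 <= B.
Proof.
move=> n0 B0 h; rewrite -(sqr_sqrtr B0) ler_pXn2r // ?nnegrE ?sqrtr_ge0 //.
Qed.

Lemma HS (T : Type) (rho : kernel R T) (t n2 : R) psi phi :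
  psd rho -> hasSum (fun x => rho x x) t%:C%C ->
  hasSum (fun y => `|psi y| ^+ 2) n2%:C%C -> applies rho psi phi ->
  exists s : R, hasSum (fun x => `|phi x| ^+ 2) s%:C%C /\ s <= t ^+ 2 * n2.
Proof.
move=> H Ht Hn Ha.
have t0 : 0 <= t by have := diag_partial H Ht (List.NoDup_nil _); rewrite big_nil.
have n0 : 0 <= n2 by have := l2_partial Hn (List.NoDup_nil _); rewrite big_nil.
have d0 : forall x, 0 <= complex.Re (rho x x) by move=> x; apply/ge0_Re/psd_diag.
have pt : forall x, nr (phi x) ^+ 2 <= complex.Re (rho x x) * t * n2.
  move=> x; set B := complex.Re (rho x x) * t * n2.
  have B0 : 0 <= B by rewrite /B !mulr_ge0.
  apply: sq_of_le_sqrt => //; first exact: nr_ge0.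
  apply: le_from_eps => e e0.
  have e0' : 0 < (e%:C)%C :> C by rewrite ltcR.
  have [G0 HG] := Ha x (e%:C)%C e0'.
  have A := HG (Un G0 [::]) (Un_nodup _ _) (@incl_Unl _ _ _).
  set G := Un G0 [::] in A.
  have S : nr (\sum_(y <- G) rho x y * psi y) <= Num.sqrt B.
    apply: le_sqrt_of_sq => //; first exact: nr_ge0.
    apply: (@le_trans _ _ ((\sum_(y <- G) nr (rho x y) * nr (psi y)) ^+ 2)).
      rewrite ler_pXn2r ?nnegrE ?nr_ge0 //; last first.
        by rewrite sumr_ge0 // => y _; rewrite mulr_ge0 ?nr_ge0.
      apply: le_trans (nr_sum _ _) _.
      by apply: sum_le_In => y _; rewrite nrM.
    apply: le_trans (CS _ _ _) _.
    rewrite /B; apply: ler_pM.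
    - by rewrite sumr_ge0 // => y _; apply: sqr_ge0.
    - by rewrite sumr_ge0 // => y _; apply: sqr_ge0.
    - apply: (@le_trans _ _ (\sum_(y <- G) complex.Re (rho x x) * complex.Re (rho y y))).
        by apply: sum_le_In => y _; apply: psd_cs.
      rewrite -mulr_sumr ler_wpM2l //.
      exact: diag_partial (Un_nodup _ _).
    - exact: l2_partial (Un_nodup _ _).
  have E1 : nr (phi x) <= nr (\sum_(y <- G) rho x y * psi y) +
                         nr (phi x - \sum_(y <- G) rho x y * psi y).
    by apply: le_trans (nrD _ _); rewrite addrC subrK.
  have E2 : nr (phi x - \sum_(y <- G) rho x y * psi y) < e.
    by rewrite nrB -ltcR -normE.
  lra.
have [s Hs] : exists s : R, hasSumR (fun _ => True) (fun x => (nr (phi x) ^+ 2)%:C%C) s%:C%C.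
  apply: (@sup_exists R T (fun _ => True) (fun x => nr (phi x) ^+ 2) (t ^+ 2 * n2)).
    by move=> x _; apply: sqr_ge0.
  move=> F N _.
  apply: (@le_trans _ _ (\sum_(x <- F) complex.Re (rho x x) * t * n2)).
    by apply: sum_le_In => x _; apply: pt.
  rewrite -!mulr_suml; apply: ler_wpM2r => //.
  rewrite expr2; apply: ler_wpM2r => //; exact: diag_partial.
exists s; split.
  by apply/hasSumRT; apply: hasSumR_ext Hs => x _; rewrite normX2.
rewrite -lecR; apply: lim_le_bound Hs => F N _.
rewrite -rmorph_sum lecR.
apply: (@le_trans _ _ (\sum_(x <- F) complex.Re (rho x x) * t * n2)).
  by apply: sum_le_In => x _; apply: pt.
rewrite -!mulr_suml; apply: ler_wpM2r => //.
rewrite expr2; apply: ler_wpM2r => //; exact: diag_partial.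
Qed.

End HSs.



Section Main1.
Variable R : realType.
Local Notation C := R[i].

Lemma partial_Re (T : Type) (f : T -> C) s F :
  (forall i, 0 <= f i) -> hasSum f s -> List.NoDup F ->
  \sum_(i <- F) complex.Re (f i) <= complex.Re s.
Proof.
move=> f0 /hasSumRT H N; rewrite -Re_sum; apply: le_Re.
by apply: (lim_ge _ H) => // i _.
Qed.

Lemma Cle_Re (T : Type) (f : T -> C) s F :
  \sum_(i <- F) f i <= s -> \sum_(i <- F) complex.Re (f i) <= complex.Re s.
Proof. by move=> H; rewrite -Re_sum; apply: le_Re. Qed.

Lemma sum_exists (I K X : Type) (π : K -> X) (rho0 : I -> kernel R K)
  (rhos : I -> kernel R X) (sigma : kernel R X) :
  (forall i, psd (rho0 i)) -> (forall i, psd (rhos i)) ->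
  (forall i p, rho0 i p p <= rhos i (π p) (π p)) ->
  (forall x, hasSum (fun i => rhos i x x) (sigma x x)) ->
  forall p q, exists s, hasSum (fun i => rho0 i p q) s.
Proof.
move=> H0 Hs Hle Hsig p q.
have [s Hs'] : exists s, hasSumR (fun _ => True) (fun i => rho0 i p q) s.
  apply: (@abs_exists R I _ _ ((complex.Re (sigma (π p) (π p)) +
                                complex.Re (sigma (π q) (π q))) / 2)).
  move=> F N _.
  apply: (@le_trans _ _ (\sum_(i <- F) (complex.Re (rhos i (π p) (π p)) +
                                        complex.Re (rhos i (π q) (π q))) / 2)).
    apply: sum_le_In => i _; apply: le_trans (psd_amgm _ _ (H0 i)) _.
    by rewrite ler_pM2r ?invr_gt0 ?ltr0n // lerD // le_Re.
  rewrite -mulr_suml big_split /= ler_pM2r ?invr_gt0 ?ltr0n //.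
  by apply: lerD; apply: partial_Re => // i; apply: psd_diag.
by exists s; apply/hasSumRT.
Qed.

Lemma ptrace (I K X W : Type) (emb : X -> W -> K) (rho0 : I -> kernel R K)
  (rhos : I -> kernel R X) (sigma : kernel R X) (rho0s : kernel R K) :
  (forall i, psd (rho0 i)) ->
  (forall i x x', hasSum (fun w => rho0 i (emb x w) (emb x' w)) (rhos i x x')) ->
  (forall x x', hasSum (fun i => rhos i x x') (sigma x x')) ->
  (forall p q, hasSum (fun i => rho0 i p q) (rho0s p q)) ->
  forall x x', hasSum (fun w => rho0s (emb x w) (emb x' w)) (sigma x x').
Proof.
move=> H0 Hpt Hsig H0s x x'.
pose G := fun iw : I * W => rho0 iw.1 (emb x iw.2) (emb x' iw.2).
have bnd : forall y F, List.NoDup F ->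
    \sum_(k <- F) complex.Re (rho0 k.1 (emb y k.2) (emb y k.2)) <= complex.Re (sigma y y).
  move=> y F N; apply: Cle_Re.
  apply: (@fiber_bound R _ _ fst (fun k : I * W => rho0 k.1 (emb y k.2) (emb y k.2))
            (fun i => rhos i y y)) => //.
  - by move=> k; apply: psd_diag.
  - by move=> i; apply: fiber_pair; apply: Hpt.
have [T HT] : exists T, hasSumR (fun _ => True) G T.
  apply: (@abs_exists R _ _ _ ((complex.Re (sigma x x) + complex.Re (sigma x' x')) / 2)).
  move=> F N _.
  apply: (@le_trans _ _ (\sum_(k <- F) (complex.Re (rho0 k.1 (emb x k.2) (emb x k.2)) +
                          complex.Re (rho0 k.1 (emb x' k.2) (emb x' k.2))) / 2)).
    by apply: sum_le_In => k _; apply: psd_amgm.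
  rewrite -mulr_suml big_split /= ler_pM2r ?invr_gt0 ?ltr0n //.
  by apply: lerD; apply: bnd.
move/hasSumRT: HT => HT.
have E : T = sigma x x'.
  have h1 := @fubini R _ _ fst G T (fun i => rhos i x x') HT
     (fun i => fiber_pair (Hpt i x x')).
  move/hasSumRT: h1 => h1; move/hasSumRT: (Hsig x x') => h2.
  exact: hasSumR_unique h1 h2.
rewrite -E.
apply: (@fubini R _ _ fst _ T _ (hasSum_swap HT)) => w.
by apply: fiber_pair; apply: hasSum_ext (H0s (emb x w) (emb x' w)) => i.
Qed.

Lemma quad_lim (I K : Type) (rho0 : I -> kernel R K) (rho0s : kernel R K) :
  (forall p q, hasSum (fun i => rho0 i p q) (rho0s p q)) ->
  forall (F : seq K) (c : K -> C),
  hasSum (fun i => \sum_(x <- F) \sum_(y <- F) (c x)^* * rho0 i x y * c y)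
         (\sum_(x <- F) \sum_(y <- F) (c x)^* * rho0s x y * c y).
Proof.
move=> H F c; apply/hasSumRT.
apply: hasSumR_big => x; apply: hasSumR_big => y.
have := hasSumR_scale ((c x)^* * c y) (proj1 (hasSumRT _ _) (H x y)).
have -> : (c x)^* * rho0s x y * c y = (c x)^* * c y * rho0s x y by ring.
by apply: hasSumR_ext => i _; ring.
Qed.

End Main1.



Section Main2.
Variable R : realType.
Local Notation C := R[i].

Lemma d0_sum (I K : Type) (rho0 : I -> kernel R K) (rho0s : kernel R K) :
  (forall i, psd (rho0 i)) -> (forall p q, hasSum (fun i => rho0 i p q) (rho0s p q)) ->
  forall p, 0 <= rho0s p p.
Proof.
move=> H0 H0s p; apply: (lim_ge0 _ (proj1 (hasSumRT _ _) (H0s p p))) => i _.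
exact: psd_diag.
Qed.

Lemma psd_sum (I K : Type) (rho0 : I -> kernel R K) (rho0s : kernel R K) :
  (forall i, psd (rho0 i)) -> (forall p q, hasSum (fun i => rho0 i p q) (rho0s p q)) ->
  psd rho0s.
Proof.
move=> H0 H0s F c; have h := quad_lim H0s F c.
by apply: (lim_ge0 _ (proj1 (hasSumRT _ _) h)) => i _; apply: H0.
Qed.

Lemma mixed_sum (I K X W : Type) (π : K -> X) (emb : X -> W -> K)
  (rho0 : I -> kernel R K) (rho0s : kernel R K) (sigma : kernel R X) :
  (forall i, psd (rho0 i)) -> (forall p q, hasSum (fun i => rho0 i p q) (rho0s p q)) ->
  (forall x w, π (emb x w) = x) -> (forall k, exists w, emb (π k) w = k) ->
  (forall x w w', emb x w = emb x w' -> w = w') ->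
  (forall x, hasSum (fun w => rho0s (emb x w) (emb x w)) (sigma x x)) ->
  summable (fun x => sigma x x) -> mixed rho0s.
Proof.
move=> H0 H0s πe surj inj Hpt [trs Htr].
split; first exact: psd_sum H0s.
have d0 := d0_sum H0 H0s.
have [s Hs] : exists s, hasSumR (fun _ => True) (fun p => rho0s p p) s.
  apply: (@abs_exists R _ _ _ (complex.Re trs)) => F N _.
  rewrite (sum_ext_In (g := fun p => complex.Re (rho0s p p))); last first.
    by move=> p _; rewrite nr_real.
  apply: Cle_Re.
  apply: (@fiber_bound R _ _ π (fun p => rho0s p p) (fun x => sigma x x) trs) => //.
  move=> x; apply: (@hasSum_inj R _ _ (emb x) (fun k => π k = x)).
  - by move=> a b /inj.
  - by move=> w; apply: πe.
  - by move=> k <-; apply: surj.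
  - exact: Hpt.
by exists s; apply/hasSumRT.
Qed.

Lemma Re_mul_real (a b : C) : 0 <= a -> 0 <= b ->
  complex.Re (a * b) = complex.Re a * complex.Re b.
Proof.
case: a => a1 a2; case: b => b1 b2; rewrite !lecE /= => /andP[/eqP -> _] /andP[/eqP -> _] /=.
by rewrite mulr0 subr0.
Qed.

Lemma tensor_amgm (V W : Type) (r : kernel R V) (r' : kernel R W) p q :
  psd r -> psd r' ->
  nr (tensor r r' p q) <= (complex.Re (tensor r r' p p) + complex.Re (tensor r r' q q)) / 2.
Proof.
move=> Hr Hr'; rewrite /tensor !Re_mul_real ?psd_diag //.
apply: amgm; first by rewrite nrM mulr_ge0 ?nr_ge0.
- by rewrite mulr_ge0 // ge0_Re // psd_diag.
- by rewrite mulr_ge0 // ge0_Re // psd_diag.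
rewrite nrM exprMn.
have := psd_cs p.1 q.1 Hr; have := psd_cs p.2 q.2 Hr' => h2 h1.
have : nr (r p.1 q.1) ^+ 2 * nr (r' p.2 q.2) ^+ 2 <=
  (complex.Re (r p.1 p.1) * complex.Re (r q.1 q.1)) *
  (complex.Re (r' p.2 p.2) * complex.Re (r' q.2 q.2)).
  by apply: ler_pM => //; apply: sqr_ge0.
move=> h; apply: le_trans h _; rewrite le_eqVlt; apply/orP; left; apply/eqP; ring.
Qed.

Lemma sep_sum (I : Type) (J : I -> Type) (V W : Type)
  (r : forall i, J i -> kernel R V) (r' : forall i, J i -> kernel R W)
  (rho0 : I -> kernel R (V * W)) (rho0s : kernel R (V * W)) :
  (forall i j, mixed (r i j) /\ mixed (r' i j)) ->
  (forall i p q, hasSum (fun j => tensor (r i j) (r' i j) p q) (rho0 i p q)) ->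
  (forall p q, hasSum (fun i => rho0 i p q) (rho0s p q)) ->
  mixed rho0s ->
  is_sum (fun k : {i : I & J i} => tensor (r (projT1 k) (projT2 k)) (r' (projT1 k) (projT2 k))) rho0s.
Proof.
move=> Hm Ht H0s M0; split => // p q.
pose t := fun k : {i : I & J i} => tensor (r (projT1 k) (projT2 k)) (r' (projT1 k) (projT2 k)).
have psdt : forall k p, 0 <= t k p p.
  move=> [i j] p'; rewrite /t /tensor /=; have [[h1 _] [h2 _]] := Hm i j.
  by rewrite mulr_ge0 // psd_diag.
have fib : forall p q i, hasSumR (fun k : {i : I & J i} => projT1 k = i)
                            (fun k => t k p q) (rho0 i p q).
  move=> p' q' i; apply: (@hasSum_inj R _ _ (fun j => existT J i j)
                                     (fun k : {i : I & J i} => projT1 k = i)).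
  - by move=> a b E; apply: (Eqdep.EqdepTheory.inj_pair2 _ _ _ _ _ E).
  - by [].
  - by move=> [i' j] /= E; subst i'; exists j.
  - exact: Ht.
have bnd : forall p F, List.NoDup F ->
    \sum_(k <- F) complex.Re (t k p p) <= complex.Re (rho0s p p).
  move=> p' F N; apply: Cle_Re.
  by apply: (@fiber_bound R _ _ (@projT1 I J) (fun k => t k p' p') (fun i => rho0 i p' p')).
have [T HT] : exists T, hasSumR (fun _ => True) (fun k => t k p q) T.
  apply: (@abs_exists R _ _ _ ((complex.Re (rho0s p p) + complex.Re (rho0s q q)) / 2)).
  move=> F N _.
  apply: (@le_trans _ _ (\sum_(k <- F) (complex.Re (t k p p) + complex.Re (t k q q)) / 2)).
    apply: sum_le_In => -[i j] _; have [[h1 _] [h2 _]] := Hm i j.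
    exact: tensor_amgm.
  rewrite -mulr_suml big_split /= ler_pM2r ?invr_gt0 ?ltr0n //.
  by apply: lerD; apply: bnd.
move/hasSumRT: HT => HT.
have h1 := @fubini R _ _ (@projT1 I J) (fun k => t k p q) T (fun i => rho0 i p q) HT (fib p q).
have E : T = rho0s p q.
  move/hasSumRT: h1 => h1; move/hasSumRT: (H0s p q) => h2.
  exact: hasSumR_unique h1 h2.
by rewrite -E.
Qed.

Lemma trace_sum (I K : Type) (rho0 : I -> kernel R K) (rho0s : kernel R K)
  (tr : I -> C) (tr0 : C) :
  (forall i, psd (rho0 i)) -> (forall p q, hasSum (fun i => rho0 i p q) (rho0s p q)) ->
  (forall i, hasSum (fun p => rho0 i p p) (tr i)) -> hasSum (fun p => rho0s p p) tr0 ->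
  hasSum tr tr0.
Proof.
move=> H0 H0s Htr Htr0.
pose G := fun q : K * I => rho0 q.2 q.1 q.1.
have fibfst : forall p, hasSumR (fun k : K * I => k.1 = p) G (rho0s p p).
  by move=> p; apply: fiber_pair; apply: H0s.
have [T HT] : exists T, hasSumR (fun _ => True) G T.
  apply: (@abs_exists R _ _ _ (complex.Re tr0)) => F N _.
  rewrite (sum_ext_In (g := fun k => complex.Re (G k))); last first.
    by move=> k _; rewrite nr_real // /G psd_diag.
  apply: Cle_Re.
  apply: (@fiber_bound R _ _ fst G (fun p => rho0s p p) tr0) => //.
  by move=> k; rewrite /G psd_diag.
move/hasSumRT: HT => HT.
have E : T = tr0.
  have h1 := @fubini R _ _ fst G T _ HT fibfst.
  move/hasSumRT: h1 => h1; move/hasSumRT: Htr0 => h2.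
  exact: hasSumR_unique h1 h2.
rewrite -E; apply: (@fubini R _ _ snd G T tr HT) => i.
apply: (@hasSum_inj R _ _ (fun p => (p, i))) => //.
- by move=> a b [].
- by move=> [a b] /= ->; exists a.
- exact: Htr.
Qed.

End Main2.



Section Main3.
Variable R : realType.
Local Notation C := R[i].

Lemma hasSum_zero (T : Type) : hasSum (fun _ : T => 0 : C) 0.
Proof. exact/hasSumRT/hasSumR_zero. Qed.

Lemma quad_split (I K : Type) (rho0 : I -> kernel R K) (rho0s : kernel R K) F
  (G : seq K) (c : K -> C) :
  \sum_(x <- G) \sum_(y <- G) (c x)^* * (rho0s x y - \sum_(i <- F) rho0 i x y) * c y =
  \sum_(x <- G) \sum_(y <- G) (c x)^* * rho0s x y * c y -
  \sum_(i <- F) \sum_(x <- G) \sum_(y <- G) (c x)^* * rho0 i x y * c y.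
Proof.
transitivity (\sum_(x <- G) \sum_(y <- G) ((c x)^* * rho0s x y * c y -
               \sum_(i <- F) (c x)^* * rho0 i x y * c y)).
  apply: sum_ext_In => x _; apply: sum_ext_In => y _.
  by rewrite mulrBr mulrBl mulr_sumr mulr_suml.
rewrite (eq_bigr (fun x => \sum_(y <- G) (c x)^* * rho0s x y * c y -
    \sum_(y <- G) \sum_(i <- F) (c x)^* * rho0 i x y * c y)); last first.
  by move=> x _; rewrite sumrB.
rewrite sumrB; congr (_ - _).
under eq_bigr => x _ do rewrite exchange_big.
by rewrite exchange_big.
Qed.


Lemma l2_real (T : Type) (psi : T -> C) n2c :
  hasSum (fun y => `|psi y| ^+ 2) n2c -> n2c = (complex.Re n2c)%:C%C.
Proof.
move=> /hasSumRT H; apply: ge0_real; apply: (lim_ge0 _ H) => y _.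
exact: exprn_ge0.
Qed.

Lemma range_sub (I K : Type) (A : predicate R K) (rho0 : I -> kernel R K)
  (rho0s : kernel R K) (tr : I -> R) (tr0 : R) :
  (forall i, psd (rho0 i)) -> (forall i, hasSum (fun p => rho0 i p p) (tr i)%:C%C) ->
  hasSum (fun p => rho0s p p) tr0%:C%C -> hasSum (fun i => (tr i)%:C%C) tr0%:C%C ->
  (forall p q, hasSum (fun i => rho0 i p q) (rho0s p q)) ->
  (forall i, supp_sub (rho0 i) A) -> forall phi, range rho0s phi -> A phi.
Proof.
move=> H0 Htr Htr0 Htrs H0s Hsupp phi [psi [[n2c Hn] Ha]].
have n2E := l2_real Hn.
set n2 := complex.Re n2c in n2E; rewrite n2E in Hn.
have n20 : 0 <= n2 by have := l2_partial Hn (List.NoDup_nil _); rewrite big_nil.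
have P0 := psd_sum H0 H0s.
have [phis Hphis] : {phis : I -> K -> C & forall i, applies (rho0 i) psi (phis i)}.
  apply: (@choice I (K -> C) (fun i y => applies (rho0 i) psi y)) => i.
  exact: apply_exists (H0 i) (Htr i) Hn.
have Aphi : forall i, A (phis i).
  move=> i; apply: Hsupp; split.
    by have [s [Hs _]] := HS (H0 i) (Htr i) Hn (Hphis i); exists s%:C%C.
  move=> e e0; exists (phis i); split.
    by exists psi; split => //; exists n2%:C%C.
  exists 0; split; last by rewrite exprn_gt0.
  by apply: hasSum_ext (hasSum_zero _) => x; rewrite subrr normr0 expr0n.
have ASF : forall F : seq I, A (fun p => \sum_(i <- F) phis i p).
  elim=> [|a F IH].
    have -> : (fun p => \sum_(i <- [::]) phis i p) = (fun _ => 0).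
      by apply: funext => p; rewrite big_nil.
    exact: pred_0.
  have -> : (fun p => \sum_(i <- a :: F) phis i p) =
            (fun p => phis a p + (fun p => \sum_(i <- F) phis i p) p).
    by apply: funext => p; rewrite big_cons.
  exact: pred_add.
apply: (@pred_closed R K A); split.
  by have [s [Hs _]] := HS P0 Htr0 Hn Ha; exists s%:C%C.
move=> e e0.
have eE := ge0_real (ltW e0).
set ee := complex.Re e in eE.
have ee0 : 0 < ee by move: e0; rewrite eE ltcR.
set δ := ee ^+ 2 / (n2 + ee ^+ 2 + 1).
have D0 : 0 < n2 + ee ^+ 2 + 1 by rewrite ltr_wpDl // addr_ge0 // sqr_ge0.
have d0 : 0 < δ by rewrite /δ divr_gt0 // exprn_gt0.
have hd : δ * (n2 + ee ^+ 2 + 1) = ee ^+ 2.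
  by rewrite /δ mulfVK // gt_eqF.
have d0' : 0 < (δ%:C)%C :> C by rewrite ltcR.
have [F0 HF0] := Htrs _ d0'.
pose F := Un F0 [::].
have NF : List.NoDup F by apply: Un_nodup.
have A1 := HF0 F NF (@incl_Unl _ _ _).
set tt := tr0 - \sum_(i <- F) tr i.
have ttb : `|tt| < δ.
  by move: A1; rewrite -rmorph_sum -rmorphB normC_real ltcR distrC.
pose TF := fun p q => rho0s p q - \sum_(i <- F) rho0 i p q.
have psdTF : psd TF.
  move=> G c; rewrite /TF quad_split subr_ge0.
  apply: (lim_ge _ (proj1 (hasSumRT _ _) (quad_lim H0s G c))) => //.
  by move=> i _; apply: H0.
have trTF : hasSum (fun p => TF p p) tt%:C%C.
  apply/hasSumRT.
  have := hasSumR_sub (proj1 (hasSumRT _ _) Htr0)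
           (hasSumR_big F (fun i => proj1 (hasSumRT _ _) (Htr i))).
  by rewrite /tt rmorphB rmorph_sum.
have appTF : applies TF psi (fun p => phi p - \sum_(i <- F) phis i p).
  move=> x; apply/hasSumRT.
  have := hasSumR_sub (proj1 (hasSumRT _ _) (Ha x))
           (hasSumR_big F (fun i => proj1 (hasSumRT _ _) (Hphis i x))).
  apply: hasSumR_ext => y _.
  by rewrite /TF mulrBl mulr_suml.
have [s [Hs sle]] := HS psdTF trTF Hn appTF.
exists (fun p => \sum_(i <- F) phis i p); split; first exact: ASF.
exists s%:C%C; split; first exact: Hs.
rewrite eE -rmorphXn ltcR.
move: ttb; rewrite ltr_norml => /andP[t1 t2].
have tt2 : tt ^+ 2 <= δ ^+ 2 by nra.
have d1 : δ <= 1 by nra.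
have : tt ^+ 2 * n2 <= δ ^+ 2 * n2 by rewrite ler_wpM2r.
nra.
Qed.

Lemma supp_from_range (K : Type) (A : predicate R K) (rho : kernel R K) :
  (forall phi, range rho phi -> A phi) -> supp_sub rho A.
Proof.
move=> H phi [l2 Hcl]; apply: (@pred_closed R K A); split => // e e0.
by have [g [rg dg]] := Hcl e e0; exists g; split => //; apply: H.
Qed.

End Main3.



Theorem lemma13 (R : realType) (X E U : Type) (A : predicate R ((X * E) * U))
  (I : Type) (rhos : I -> kernel R X) (sigma : kernel R X) :
  (forall i, mixed (rhos i)) ->
  (forall i, sat (rhos i) A) ->
  is_sum rhos sigma ->
  sat sigma A.
Proof.
move=> Hm Hsat [Msig Hsig].
pose K := ((X * E) * U)%type.
pose emb := fun (x : X) (w : E * U) => ((x, w.1), w.2) : K.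
pose π := fun k : K => k.1.1.
have [rho0 H0] := @choice I (kernel R K) (fun i r => mixed r /\ separable r /\ supp_sub r A /\
    forall x x', hasSum (fun w : E * U => r ((x, w.1), w.2) ((x', w.1), w.2)) (rhos i x x')) Hsat.
have psd0 : forall i, psd (rho0 i) by move=> i; case: (H0 i) => -[].
have H0pt : forall i x x', hasSum (fun w => rho0 i (emb x w) (emb x' w)) (rhos i x x').
  by move=> i; case: (H0 i) => _ [_ [_]].
have Hle : forall i p, rho0 i p p <= rhos i (π p) (π p).
  move=> i [[x e] u].
  have := @lim_ge R _ (fun _ => True) _ _ [:: (e, u)] _ (proj1 (hasSumRT _ _) (H0pt i x x)).
  rewrite big_cons big_nil addr0; apply => //.
  - by move=> w _; apply: psd_diag.
  - by constructor; [|constructor].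
have Hex := @sum_exists R I K X π rho0 rhos sigma psd0 (fun i => proj1 (Hm i)) Hle
  (fun x => Hsig x x).
have [f Hf] := @choice (K * K) R[i] (fun pq s => hasSum (fun i => rho0 i pq.1 pq.2) s)
  (fun pq => Hex pq.1 pq.2).
pose rho0s := fun p q => f (p, q).
have H0s : forall p q, hasSum (fun i => rho0 i p q) (rho0s p q) by move=> p q; apply: (Hf (p, q)).
have Hpt0 := @ptrace R I K X (E * U) emb rho0 rhos sigma rho0s psd0 H0pt Hsig H0s.
have M0 : mixed rho0s.
  apply: (@mixed_sum R I K X (E * U) π emb rho0 rho0s sigma psd0 H0s).
  - by [].
  - by move=> [[x e] u]; exists (e, u).
  - by move=> x [e u] [e' u'] [-> ->].
  - by move=> x; apply: Hpt0.
  - by case: Msig.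
exists rho0s; split => //; split; last split.
-
  have Hsep' : forall i, exists s : {J : Type & ((J -> kernel R (X * E)) * (J -> kernel R U))%type},
      (forall j, mixed ((projT2 s).1 j) /\ mixed ((projT2 s).2 j)) /\
      is_sum (fun j => tensor ((projT2 s).1 j) ((projT2 s).2 j)) (rho0 i).
    move=> i; have [_ [[J [r [r' [h1 h2]]]] _]] := H0 i.
    by exists (existT _ J (r, r')).
  have [S HS] := choice Hsep'.
  exists {i : I & projT1 (S i)}, (fun k => (projT2 (S (projT1 k))).1 (projT2 k)),
    (fun k => (projT2 (S (projT1 k))).2 (projT2 k)); split.
    by move=> [i j]; apply: (proj1 (HS i)).
  apply: (@sep_sum R I (fun i => projT1 (S i)) (X * E) U
            (fun i j => (projT2 (S i)).1 j) (fun i j => (projT2 (S i)).2 j) rho0 rho0s) => //.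
  + by move=> i j; apply: (proj1 (HS i)).
  + by move=> i p q; apply: (proj2 (proj2 (HS i))).
-
  apply: supp_from_range.
  have [trc Htrc] := @choice I R[i] (fun i s => hasSum (fun p => rho0 i p p) s)
    (fun i => proj2 (proj1 (H0 i))).
  have [tr0c Htr0c] := proj2 M0.
  have Htrs := @trace_sum R I K rho0 rho0s trc tr0c psd0 H0s Htrc Htr0c.
  have trE : forall i, trc i = (complex.Re (trc i))%:C%C.
    move=> i; apply: ge0_real; apply: (lim_ge0 _ (proj1 (hasSumRT _ _) (Htrc i))) => p _.
    exact: psd_diag.
  have tr0E : tr0c = (complex.Re tr0c)%:C%C.
    apply: ge0_real; apply: (lim_ge0 _ (proj1 (hasSumRT _ _) Htr0c)) => p _.
    exact: (d0_sum psd0 H0s).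
  apply: (@range_sub R I K A rho0 rho0s (fun i => complex.Re (trc i)) (complex.Re tr0c) psd0).
  + by move=> i; rewrite -trE.
  + by rewrite -tr0E.
  + by rewrite -tr0E; apply: hasSum_ext Htrs => i; rewrite -trE.
  + exact: H0s.
  + by move=> i; case: (H0 i) => _ [_ []].
- exact: Hpt0.
Qed.
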